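(* Let $n\ge1$, $m\ge1$ and $0\le j\le n$. For every integer $k\ge0$, the weight numbers of $\Delta^j_{n,m}=\Delta(G^j_{n,m})$ satisfy $$W_{\Delta^j_{n,m}}(k)=\sum_{i=0}^j2^{j-i}(-1)^i\binom ji W_{\Delta^0_{n-i,m}}(k),$$ where $W_{\Delta^0_{0,m}}(k)=1$ if $k=0$ and $0$ otherwise.
   Context: $G^j_{n,m}=x_1^m+\dots+x_n^m+x_1^{-m}+\dots+x_j^{-m}$; its Newton polytope $\Delta^j_{n,m}$ is the convex hull of $\vec0$, $me_1,\dots,me_n$ and $-me_1,\dots,-me_j$, and $\Delta^0_{n',m}$ denotes the simplex with vertices $\vec 0,me_1,\dots,me_{n'}$ in $\mathbb{R}^{n'}$. For a polytope $\Delta\ni\vec0$ the weight $w(u)$ of $u\in\mathbb Q^n$ is the least $c\in\mathbb Q_{\ge0}$ with $u\in c\Delta$. All these polytopes have denominator $m$, and $W_\Delta(k)=\#\{u\in\mathbb{Z}^n:w(u)=k/m\}$. *)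

(* Defs.v *)
From HB Require Import structures.
From mathcomp Require Import all_boot all_order all_algebra.
From Stdlib Require Import ClassicalEpsilon.
Set Implicit Arguments. Unset Strict Implicit. Unset Printing Implicit Defensive.
Import Order.TTheory GRing.Theory Num.Theory.
Local Open Scope ring_scope.

Definition pt (n : nat) := 'I_n -> rat.

Definition pb (P : Prop) : bool :=
  if excluded_middle_informative P then true else false.

Definition in_hull (n : nat) (V : seq (pt n)) (x : pt n) : Prop :=
  exists lam : nat -> rat,
    (forall i, 0 <= lam i) /\
    \sum_(i < size V) lam i = 1 /\
    forall t : 'I_n, x t = \sum_(i < size V) lam i * (nth (fun _ => 0) V i) t.

Definition in_dilate (n : nat) (V : seq (pt n)) (c : rat) (x : pt n) : Prop :=
  exists y, in_hull V y /\ forall t, x t = c * y t.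

Definition is_weight (n : nat) (V : seq (pt n)) (x : pt n) (c : rat) : Prop :=
  0 <= c /\ in_dilate V c x /\
  forall c', 0 <= c' -> in_dilate V c' x -> c <= c'.

Definition sbv (n : nat) (a : rat) (i : 'I_n) : pt n :=
  fun t => if t == i then a else 0.

Definition Delta (n m j : nat) : seq (pt n) :=
  (fun _ => 0) :: [seq sbv m%:R i | i <- enum 'I_n]
               ++ [seq sbv (- m%:R) i | i : 'I_n <- enum 'I_n & (nat_of_ord i < j)%N].

Definition Delta0 (n' m : nat) : seq (pt n') := Delta n' m 0.

Definition decode (n k : nat) (f : {ffun 'I_n -> 'I_(k.*2.+1)}) : pt n :=
  fun t => (nat_of_ord (f t))%:R - k%:R.

(* W_Delta(k) = #{u in Z^n : w(u) = k/m}.  Every such u lies in the box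
   [-k,k]^n since the polytopes used here lie in [-m,m]^n, so we count over
   that box. *)
Definition W (n : nat) (V : seq (pt n)) (m k : nat) : nat :=
  #|[pred f : {ffun 'I_n -> 'I_(k.*2.+1)} |
      pb (is_weight V (decode f) (k%:R / m%:R))]|.

(* Main.v *)
Require Import Defs.
From HB Require Import structures.
From mathcomp Require Import all_boot all_order all_algebra zify ring lra.
From Stdlib Require Import ClassicalEpsilon.
Import Order.TTheory GRing.Theory Num.Theory.
Set Implicit Arguments. Unset Strict Implicit. Unset Printing Implicit Defensive.
Local Open Scope ring_scope.

Definition wd (k a : nat) : nat := ((a - k) + (k - a))%N.
Definition Pp (k : nat) : {poly int} :=
  \sum_(a : 'I_(k.*2.+1) | (k <= a)%N) 'X^(wd k a).
Definition Qp (k : nat) : {poly int} := \sum_(a : 'I_(k.*2.+1)) 'X^(wd k a).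

Lemma QP k : Qp k = Pp k *+ 2 - 1.
Proof.
have k0lt : (k < k.*2.+1)%N by lia.
pose k0 : 'I_(k.*2.+1) := Ordinal k0lt.
have NP : \sum_(a : 'I_(k.*2.+1) | (a <= k)%N) 'X^(wd k a) = Pp k.
  rewrite /Pp (reindex_inj rev_ord_inj) /=.
  apply: eq_big => a; have := ltn_ord a; rewrite /= /wd => h.
    by apply/idP/idP; lia.
  move=> _; congr ('X^_); lia.
rewrite /Qp (bigID (fun a : 'I_(k.*2.+1) => (k <= a)%N)) /= -/(Pp k) -NP.
rewrite [X in _ = _ + X - _](bigD1 k0) //= /wd subnn addn0 expr0.
rewrite -addrA (addrC 1) addrK; congr (_ + _); apply: eq_bigl => a.
by rewrite -(inj_eq val_inj) /=; apply/idP/idP; lia.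
Qed.

Lemma prod_ifX (I : finType) (b : I -> bool) (e : I -> nat) :
  \prod_(t : I) (if b t then 'X^(e t) else 0 : {poly int}) =
  if [forall t, b t] then 'X^(\sum_t e t) else 0.
Proof.
case: (boolP [forall t, b t]) => [/forallP h|/forallPn [t ht]].
  by rewrite (eq_bigr (fun t => 'X^(e t))) ?prodrXr // => t _; rewrite h.
by rewrite (bigD1 t) //= (negbTE ht) mul0r.
Qed.

Lemma count_poly n j k :
  (#|[pred f : {ffun 'I_n -> 'I_(k.*2.+1)} |
      [forall t : 'I_n, (j <= t)%N ==> (k <= f t)%N] &&
      (\sum_t wd k (f t) == k)]|)%:Z
  = (\prod_(t < n) (if (t < j)%N then Qp k else Pp k))`_k.
Proof.
rewrite (eq_bigr (fun t : 'I_n => \sum_(a : 'I_(k.*2.+1))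
   (if (j <= t)%N ==> (k <= a)%N then 'X^(wd k a) else 0))); last first.
  move=> t _; case: ltnP => h /=.
    by rewrite /Qp; apply: eq_bigr => a _.
  by rewrite /Pp big_mkcond.
rewrite bigA_distr_bigA /= coef_sum -sum1_card -natz natr_sum big_mkcond /=.
apply: eq_bigr => f _; rewrite prod_ifX inE.
case: [forall _, _] => /=; last by rewrite coef0.
by rewrite coefXn eq_sym; case: (_ == _).
Qed.

Lemma prod_split n j (A B : {poly int}) : (j <= n)%N ->
  \prod_(t < n) (if (t < j)%N then A else B) = A ^+ j * B ^+ (n - j).
Proof.
move=> jn.
rewrite -(big_mkord xpredT (fun t => if (t < j)%N then A else B)).
rewrite (big_cat_nat (leq0n j) jn) /=; congr (_ * _).
  rewrite (@eq_big_nat _ _ _ 0 j _ (fun=> A)); first by rewrite prodr_const_nat subn0.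
  by move=> i /andP [_ ->].
rewrite (@eq_big_nat _ _ _ j n _ (fun=> B)); first by rewrite prodr_const_nat.
by move=> i /andP [h _]; rewrite ltnNge h.
Qed.
Definition normsum n (x : pt n) : rat := \sum_t `|x t|.
Definition condj n (j : nat) (x : pt n) : Prop := forall t : 'I_n, (j <= t)%N -> 0 <= x t.

Lemma sbv_norm n a (s : 'I_n) : \sum_t `|sbv a s t| = `|a|.
Proof.
rewrite (bigD1 s) //= /sbv eqxx big1 ?addr0 // => t /negbTE ->.
by rewrite normr0.
Qed.

Lemma vert_ok n m j i :
  (forall t : 'I_n, (j <= t)%N -> 0 <= nth (fun _ => 0) (Delta n m j) i t) /\
  \sum_t `|nth (fun _ => 0) (Delta n m j) i t| <= m%:R.
Proof.
pose pv (v : pt n) := [forall t : 'I_n, (j <= t)%N ==> (0 <= v t)] &&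
   (\sum_t `|v t| <= m%:R).
suff : pv (nth (fun _ => 0) (Delta n m j) i).
  by case/andP => /forallP h ->; split => // t jt; have := h t; rewrite jt.
have p0 : pv (fun _ => 0).
  apply/andP; split; first by apply/forallP => t; apply/implyP.
  by rewrite big1 ?ler0n // => t _; rewrite normr0.
case: (ltnP i (size (Delta n m j))) => hi; last by rewrite nth_default.
move: i hi; apply/all_nthP.
change (pv (fun _ => 0) && all pv ([seq sbv m%:R i | i <- enum 'I_n] ++
  [seq sbv (- m%:R) i | i : 'I_n <- enum 'I_n & (nat_of_ord i < j)%N])).
rewrite p0 andTb all_cat !all_map; apply/andP; split.
  apply/allP => s _ /=; apply/andP; split.
    by apply/forallP => t; apply/implyP => _; rewrite /sbv; case: (_ == _).
  by rewrite sbv_norm ger0_norm.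
apply/allP => s; rewrite mem_filter => /andP [hs _] /=; apply/andP; split.
  apply/forallP => t; apply/implyP => ht; rewrite /sbv.
  case: eqP => [e|//]; move: ht hs; rewrite e; lia.
by rewrite sbv_norm normrN ger0_norm.
Qed.

Lemma dilate_nec n m j c (x : pt n) : 0 <= c -> in_dilate (Delta n m j) c x ->
  condj j x /\ normsum x <= c * m%:R.
Proof.
move=> c0 [y [[lam [lam0 [lam1 ly]]] xy]].
have hv := vert_ok n m j.
split.
  move=> t jt; rewrite xy ly; apply: mulr_ge0 => //; apply: sumr_ge0 => i _.
  apply: mulr_ge0 => //; exact: (hv i).1.
have H : \sum_t `|y t| <= m%:R.
  apply: (@le_trans _ _ (\sum_t \sum_(i < size (Delta n m j))
             lam i * `|nth (fun _ => 0) (Delta n m j) i t|)).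
    apply: ler_sum => t _; rewrite ly; apply: (le_trans (ler_norm_sum _ _ _)).
    by apply: ler_sum => i _; rewrite normrM (ger0_norm (lam0 i)).
  rewrite exchange_big /=.
  apply: (@le_trans _ _ (\sum_(i < size (Delta n m j)) lam i * m%:R)).
    apply: ler_sum => i _; rewrite -mulr_sumr; apply: ler_wpM2l => //.
    exact: (hv i).2.
  by rewrite -mulr_suml lam1 mul1r.
rewrite /normsum (eq_bigr (fun t => c * `|y t|)); last first.
  by move=> t _; rewrite xy normrM ger0_norm.
by rewrite -mulr_sumr; apply: ler_wpM2l.
Qed.

Definition posp (a : rat) := if 0 <= a then a else 0.
Definition negp (a : rat) := if 0 <= a then 0 else - a.

Lemma pospB a : posp a - negp a = a.
Proof. by rewrite /posp /negp; case: ifP => _; rewrite ?subr0 ?sub0r ?opprK. Qed.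
Lemma pospD a : posp a + negp a = `|a|.
Proof.
rewrite /posp /negp; case: (lerP 0 a) => h.
  by rewrite addr0 ger0_norm.
by rewrite add0r ltr0_norm.
Qed.
Lemma posp_ge0 a : 0 <= posp a.
Proof. by rewrite /posp; case: ifP. Qed.
Lemma negp_ge0 a : 0 <= negp a.
Proof. rewrite /negp; case: (lerP 0 a) => // h; by rewrite oppr_ge0 ltW. Qed.
Lemma negp0 a : 0 <= a -> negp a = 0.
Proof. by rewrite /negp => ->. Qed.

Lemma sumDelta n m j (G : pt n -> rat) :
  \sum_(i < size (Delta n m j)) G (nth (fun _ => 0) (Delta n m j) i) =
  G (fun _ => 0) + \sum_s G (sbv m%:R s) + \sum_(s : 'I_n | (s < j)%N) G (sbv (- m%:R) s).
Proof.
rewrite -(big_mkord xpredT (fun i => G (nth (fun _ => 0) (Delta n m j) i))).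
rewrite -(big_nth (fun _ => 0) xpredT G) /Delta big_cons big_cat !big_map big_filter.
rewrite addrA; congr (_ + _ + _).
by rewrite big_enum_cond.
Qed.

Lemma hull_suff n m j (y : pt n) : (0 < m)%N -> condj j y ->
  normsum y <= m%:R -> in_hull (Delta n m j) y.
Proof.
move=> m0 cy sy.
have M0 : 0 < (m%:R : rat) by rewrite ltr0n.
have e1 : ((0 : rat) == m%:R) = false by apply/eqP => e; lra.
have e2 : ((0 : rat) == - m%:R) = false by apply/eqP => e; lra.
have e3 : ((m%:R : rat) == - m%:R) = false by apply/eqP => e; lra.
have e4 : ((- m%:R : rat) == m%:R) = false by apply/eqP => e; lra.
pose g (v : pt n) : rat := \sum_t (posp (y t) * (v t == m%:R)%:R
                                    + negp (y t) * (v t == - m%:R)%:R) / m%:R.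
pose h (v : pt n) : rat := (if [forall t, v t == 0] then 1 - normsum y / m%:R else 0) + g v.
have gs a s : g (sbv a s) = (posp (y s) * (a == m%:R)%:R + negp (y s) * (a == - m%:R)%:R) / m%:R.
  rewrite /g (bigD1 s) //= big1 ?addr0 /sbv ?eqxx // => t /negbTE ->.
  by rewrite e1 e2 !mulr0 addr0 mul0r.
have fs a s : a != 0 -> [forall t, sbv a s t == 0] = false.
  move=> a0; apply/negbTE/forallPn; exists s; by rewrite /sbv eqxx.
have Mn0 : (m%:R : rat) != 0 by rewrite gt_eqF.
have MNn0 : (- m%:R : rat) != 0 by rewrite oppr_eq0.
have h0 : h (fun _ => 0) = 1 - normsum y / m%:R.
  rewrite /h; have -> : [forall t : 'I_n, (0 : rat) == 0] by apply/forallP.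
  by rewrite /g big1 ?addr0 // => t _; rewrite e1 e2 !mulr0 addr0 mul0r.
have hp s : h (sbv m%:R s) = posp (y s) / m%:R.
  by rewrite /h fs // add0r gs eqxx e3 mulr0 addr0 mulr1.
have hn s : h (sbv (- m%:R) s) = negp (y s) / m%:R.
  by rewrite /h fs // add0r gs eqxx e4 mulr0 add0r mulr1.
have nj (s : 'I_n) : ~~ (s < j)%N -> negp (y s) = 0.
  by rewrite -leqNgt => hs; apply: negp0; apply: cy.
have hge v : 0 <= h v.
  apply: addr_ge0.
    case: ifP => // _; rewrite subr_ge0 ler_pdivrMr // mul1r //.
  rewrite /g; apply: sumr_ge0 => t _; apply: divr_ge0; last by apply: ltW.
  by apply: addr_ge0; apply: mulr_ge0; rewrite ?posp_ge0 ?negp_ge0 ?ler0n.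
exists (fun i => h (nth (fun _ => 0) (Delta n m j) i)); split => //; split.
  rewrite sumDelta h0 (eq_bigr (fun s => posp (y s) / m%:R)); last by move=> s _ /=; rewrite hp.
  rewrite [X in _ + X](eq_bigr (fun s => negp (y s) / m%:R)); last by move=> s _ /=; rewrite hn.
  rewrite [X in _ + X]big_mkcond /=.
  rewrite [X in _ + X](eq_bigr (fun s => negp (y s) / m%:R)); last first.
    by move=> s _; case: ifP => // /negbT /nj ->; rewrite mul0r.
  rewrite -!mulr_suml -addrA -mulrDl -big_split /=.
  rewrite (eq_bigr (fun s => `|y s|)) ?subrK // => s _; exact: pospD.
move=> t.
rewrite (sumDelta m j (fun v => h v * v t)) h0 mulr0 add0r.
rewrite (eq_bigr (fun s => posp (y s) / m%:R * sbv m%:R s t)); last by move=> s _ /=; rewrite hp.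
rewrite [X in _ + X](eq_bigr (fun s => negp (y s) / m%:R * sbv (- m%:R) s t)); last by move=> s _ /=; rewrite hn.
rewrite [X in _ + X]big_mkcond /=.
rewrite [X in _ + X](eq_bigr (fun s => negp (y s) / m%:R * sbv (- m%:R) s t)); last first.
  by move=> s _; case: ifP => // /negbT /nj ->; rewrite !mul0r.
rewrite (bigD1 t) //= [X in _ + X](bigD1 t) //= /sbv eqxx.
rewrite !big1 ?addr0; first last.
- by move=> s /negbTE; rewrite eq_sym => ->; rewrite mulr0.
- by move=> s /negbTE; rewrite eq_sym => ->; rewrite mulr0.
by rewrite mulrN !divfK // pospB.
Qed.

Lemma dilate_suff n m j c (x : pt n) : (0 < m)%N -> 0 <= c -> condj j x ->
  normsum x <= c * m%:R -> in_dilate (Delta n m j) c x.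
Proof.
move=> m0 c0 cx sx.
have M0 : 0 < (m%:R : rat) by rewrite ltr0n.
case: (eqVneq c 0) => [ce|cn0].
  have x0 t : x t = 0.
    apply/eqP; rewrite -normr_le0.
    apply: (@le_trans _ _ (normsum x)); last by move: sx; rewrite ce mul0r.
    rewrite /normsum (bigD1 t) //= lerDl; apply: sumr_ge0 => *; exact: normr_ge0.
  exists (fun _ => 0); split; last by move=> t; rewrite x0 mulr0.
  apply: hull_suff => //; try by move=> t _.
  by rewrite /normsum big1 ?ler0n // => t _; rewrite normr0.
have cp : 0 < c by rewrite lt_neqAle eq_sym cn0 c0.
exists (fun t => x t / c); split; last by move=> t; rewrite mulrC divfK.
apply: hull_suff => //.
  by move=> t jt; apply: divr_ge0 => //; apply: cx.
rewrite /normsum (eq_bigr (fun t => `|x t| / c)); last first.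
  by move=> t _; rewrite normrM normfV (ger0_norm c0).
by rewrite -mulr_suml ler_pdivrMr // mulrC.
Qed.

Lemma weightP n m j (x : pt n) c : (0 < m)%N ->
  is_weight (Delta n m j) x c <-> condj j x /\ c = normsum x / m%:R.
Proof.
move=> m0.
have M0 : 0 < (m%:R : rat) by rewrite ltr0n.
have S0 : 0 <= normsum x by apply: sumr_ge0 => *; exact: normr_ge0.
split.
  move=> [c0 [d mn]].
  have [cx sx] := dilate_nec c0 d.
  split => //.
  apply/le_anti/andP; split.
    apply: mn; first by apply: divr_ge0 => //; apply: ltW.
    by apply: dilate_suff => //; [apply: divr_ge0 => //; apply: ltW | rewrite divfK ?gt_eqF].
  by rewrite ler_pdivrMr.
move=> [cx ->]; split; first by apply: divr_ge0 => //; apply: ltW.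
split.
  by apply: dilate_suff => //; [apply: divr_ge0 => //; apply: ltW | rewrite divfK ?gt_eqF].
move=> c' c0 d; have [_ sx] := dilate_nec c0 d.
by rewrite ler_pdivrMr.
Qed.

Lemma pbE (P : Prop) (b : bool) : (P <-> b) -> pb P = b.
Proof.
move=> h; rewrite /pb; case: excluded_middle_informative => p.
  by apply/esym; apply/h.
by case: b h => // h; exfalso; apply: p; apply/h.
Qed.

Lemma decode_norm k (a : nat) : `|(a%:R : rat) - k%:R| = (wd k a)%:R.
Proof.
rewrite /wd; case: (leqP k a) => h.
  have -> : (k - a = 0)%N by lia.
  by rewrite addn0 natrB // ger0_norm // subr_ge0 ler_nat.
have h' : (a <= k)%N by lia.
have -> : (a - k = 0)%N by lia.
by rewrite add0n distrC natrB // ger0_norm // subr_ge0 ler_nat.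
Qed.

Lemma W_count n m j k : (0 < m)%N ->
  W (Delta n m j) m k = #|[pred f : {ffun 'I_n -> 'I_(k.*2.+1)} |
      [forall t : 'I_n, (j <= t)%N ==> (k <= f t)%N] && (\sum_t wd k (f t) == k)]|.
Proof.
move=> m0; rewrite /W; apply: eq_card => f; rewrite !inE.
apply: pbE; rewrite weightP //.
have M0 : (m%:R : rat) != 0 by rewrite pnatr_eq0 -lt0n.
have ns : normsum (decode f) = (\sum_t wd k (f t))%:R.
  by rewrite /normsum natr_sum; apply: eq_bigr => t _; rewrite /decode decode_norm.
rewrite ns; split.
  move=> [cx e]; apply/andP; split.
    apply/forallP => t; apply/implyP => jt; have := cx t jt.
    by rewrite /decode subr_ge0 ler_nat.
  have := congr1 (fun z => z * m%:R) e; rewrite !divfK // => /eqP.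
  by rewrite eqr_nat eq_sym.
move=> /andP [/forallP cx /eqP e]; split.
  by move=> t jt; have := cx t; rewrite jt /= /decode subr_ge0 ler_nat.
by rewrite e.
Qed.

Lemma W_poly n m j k : (0 < m)%N -> (j <= n)%N ->
  (W (Delta n m j) m k)%:Z = (Qp k ^+ j * Pp k ^+ (n - j))`_k.
Proof. by move=> m0 jn; rewrite W_count // count_poly prod_split. Qed.

Theorem proposition4p3 (n m j k : nat) :
  (1 <= n)%N -> (1 <= m)%N -> (j <= n)%N ->
  ((W (Delta n m j) m k)%:Z : int) =
  \sum_(i < j.+1)
     ((2 ^ (j - i) * 'C(j, i) * W (Delta0 (n - i) m) m k)%N%:Z * (-1) ^+ i).
Proof.
move=> n1 m1 jn.
rewrite W_poly // QP exprDn mulr_suml coef_sum.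
apply: eq_bigr => -[i hi] _.
have ij : (i <= j)%N by [].
change (nat_of_ord (Ordinal hi)) with i.
rewrite /Delta0 PoszM W_poly // expr0 mul1r subn0.
set P := Pp k.
have -> : (P *+ 2) ^+ (j - i) * (-1) ^+ i *+ 'C(j, i) * P ^+ (n - j) =
   (((2 ^ (j - i) * 'C(j, i))%N%:Z * (-1) ^+ i)%:P * P ^+ (n - i)).
  rewrite rmorphM /= rmorphXn /= rmorphN rmorph1 -natz polyC_natr.
  have -> : (n - i = (j - i) + (n - j))%N by rewrite addnC addnBA // subnK.
  rewrite exprD exprMn_n natrM -[_ *+ 'C(j, i)]mulr_natl -[_ *+ (2 ^ (j - i))]mulr_natl.
  move: (P ^+ (j-i)) (P ^+ (n-j)) ((-1)^+i : {poly int}) ((2^(j-i))%:R : {poly int}) ('C(j,i)%:R : {poly int}) => a b c d e.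
  ring.
by rewrite coefCM mulrAC.
Qed.
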